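(* Let $\Gamma$ be a typing context, $e, e'$ terms and $A$ a type of the language $\widetilde{F}$ described in the context. If $\Gamma\vdash e:A$ and $e\to e'$ (one step of the small-step call-by-value reduction), then $\Gamma\vdash e':A$.
   Context: $\widetilde{F}$ is a higher-order functional array language. Types: $T ::= M \mid T_1\Rightarrow\cdots\Rightarrow T_n\Rightarrow M$ (function types, no currying), $M ::= \mathrm{Num}\mid \mathrm{Array}\langle M\rangle \mid M\times M\mid \mathrm{Bool}$, $\mathrm{Num}::=\mathrm{Double}\mid\mathrm{Index}$. Terms: $e ::= e\,e_1\cdots e_n \mid \lambda x_1\cdots x_n.\,e \mid x \mid r \mid i \mid \mathrm{true}\mid\mathrm{false}\mid c \mid \mathrm{let}\ x=e\ \mathrm{in}\ e \mid \mathrm{if}\ e\ \mathrm{then}\ e\ \mathrm{else}\ e \mid [e,\dots,e]\mid \bot$, where $r$ are real constants (type Double), $i$ index constants (type Index), and $\bot$ is a divergence term available at every type. Typing rules: (App) if $e_0: T_1\Rightarrow\cdots\Rightarrow T_n\Rightarrow M$ and $e_k:T_k$ then $e_0\,e_1\cdots e_n:M$; (Abs) if $\Gamma, x_1:T_1,\dots,x_n:T_n\vdash e:M$ then $\Gamma\vdash\lambda x_1\cdots x_n.e: T_1\Rightarrow\cdots\Rightarrow T_n\Rightarrow M$; (Var) $x:T\in\Gamma$ gives $\Gamma\vdash x:T$; (Let) $\Gamma\vdash e_1:T_1$ and $\Gamma,x:T_1\vdash e_2:T_2$ give $\Gamma\vdash \mathrm{let}\ x=e_1\ \mathrm{in}\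 e_2:T_2$; (If) $e_1:\mathrm{Bool}$, $e_2:M$, $e_3:M$ give $\mathrm{if}\ e_1\ \mathrm{then}\ e_2\ \mathrm{else}\ e_3:M$. Unary operators $\mathrm{op}_1$ (e.g. $-:\mathrm{Num}\Rightarrow\mathrm{Num}$; $\sin,\cos,\tan,\log,\exp:\mathrm{Double}\Rightarrow\mathrm{Double}$; $\mathrm{not}:\mathrm{Bool}\Rightarrow\mathrm{Bool}$) and binary operators $\mathrm{op}_2$ ($+,-,*,/,**:\mathrm{Num}\Rightarrow\mathrm{Num}\Rightarrow\mathrm{Num}$; $>,<,==,<>:\mathrm{Num}\Rightarrow\mathrm{Num}\Rightarrow\mathrm{Bool}$; $\&\&,||:\mathrm{Bool}\Rightarrow\mathrm{Bool}\Rightarrow\mathrm{Bool}$) are given by typing rules of the form: if $\Gamma\vdash e:A$ then $\Gamma\vdash\mathrm{op}_1(e):B$ for $\mathrm{op}_1:A\Rightarrow B$, and similarly for $\mathrm{op}_2(e_1,e_2)$. Further constants: $\mathrm{build}:\mathrm{Index}\Rightarrow(\mathrm{Index}\Rightarrow M)\Rightarrow\mathrm{Array}\langle M\rangle$, $\mathrm{ifold}:(M\Rightarrow\mathrm{Index}\Rightarrow M)\Rightarrow M\Rightarrow\mathrm{Index}\Rightarrow M$, $\mathrm{get}:\mathrm{Array}\langle M\rangle\Rightarrow\mathrm{Index}\Rightarrow M$, $\mathrm{length}:\mathrm{Array}\langle M\rangle\Rightarrow\mathrm{Index}$, $\mathrm{pair}:M_1\Rightarrow M_2\Rightarrow M_1\times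 M_2$ (written $(e_0,e_1)$), $\mathrm{fst}:M_1\times M_2\Rightarrow M_1$, $\mathrm{snd}:M_1\times M_2\Rightarrow M_2$. Values: $v::= r\mid i\mid\mathrm{true}\mid\mathrm{false}\mid (v_0,v_1)\mid \lambda x_1\cdots x_n.e\mid [v_0,\dots,v_{n-1}]$. Small-step call-by-value reduction $\to$ (left-to-right evaluation of arguments): congruence rules $e\to e'\Rightarrow e\,e_1\to e'\,e_1$; $e_0\to e_0'\Rightarrow v\,e_0\to v\,e_0'$; $\mathrm{op}_1(e)\to\mathrm{op}_1(e')$; $\mathrm{op}_2(e_0,e_1)\to\mathrm{op}_2(e_0',e_1)$; $\mathrm{op}_2(v,e_0)\to\mathrm{op}_2(v,e_0')$; $\mathrm{let}\ x=e_0\ \mathrm{in}\ e_1\to\mathrm{let}\ x=e_0'\ \mathrm{in}\ e_1$; and axioms $(\lambda x.e)\,v\to e[v/x]$; $\mathrm{let}\ x=v\ \mathrm{in}\ e\to e[v/x]$; $\mathrm{fst}(v_0,v_1)\to v_0$; $\mathrm{snd}(v_0,v_1)\to v_1$; $\mathrm{if\ true\ then}\ e_0\ \mathrm{else}\ e_1\to e_0$; $\mathrm{if\ false\ then}\ e_0\ \mathrm{else}\ e_1\to e_1$; $\mathrm{op}_1(\underline v)\to\underline{\mathrm{op}_1(v)}$ if $v\in\mathrm{Dom}(\mathrm{op}_1)$ and $\to\bot$ otherwise; $\mathrm{op}_2(\underline{v_0},\underline{v_1})\to\underline{\mathrm{op}_2(v_0,v_1)}$ if $(v_0,v_1)\in\mathrm{Dom}(\mathrm{op}_2)$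 and $\to\bot$ otherwise ($\mathrm{Dom}$ is the standard domain of definition, e.g. $\mathrm{Dom}(\tan)=\{v\in\mathbb R:\cos v\neq0\}$); $\mathrm{get}([v_0,\dots,v_{n-1}])(i)\to v_i$ for $0\le i<n$; $\mathrm{length}([v_0,\dots,v_{n-1}])\to n$; $\mathrm{build}(n)(\lambda x.e)\to[e[0/x],\dots,e[n-1/x]]$; $\mathrm{ifold}(v)(v_0)(0)\to v_0$; $\mathrm{ifold}(v)(v_0)(i+1)\to v(\mathrm{ifold}(v)(v_0)(i))(i)$. Any construct with an argument reducing to $\bot$ reduces to $\bot$. *)

(* Defs.v *)
From Stdlib Require Import Reals ZArith List.
Import ListNotations.
Open Scope R_scope.

Inductive gty : Type :=
| TDouble | TIndex | TBool
| TArray (M : gty)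
| TProd (M1 M2 : gty).

(* T ::= M | T1 => ... => Tn => M   (n >= 1, no currying):
   TFun T1 [T2;...;Tn] M  represents  T1 => T2 => ... => Tn => M. *)
Inductive ty : Type :=
| TG (M : gty)
| TFun (T1 : ty) (Ts : list ty) (M : gty).

Inductive const : Type :=
| CBuild | CIfold | CGet | CLength | CPair | CFst | CSnd.

Inductive op1 : Type := ONeg | OSin | OCos | OTan | OLog | OExp | ONot.
Inductive op2 : Type :=
| OAdd | OSub | OMul | ODiv | OPow
| OGt | OLt | OEq | ONeq
| OAnd | OOr.

(* Variables are de Bruijn indices.  [Abs n e] binds n variables x1..xn
   (xn has index 0 in e); [Let e1 e2] binds one variable in e2. *)
Inductive tm : Type :=
| Var (k : nat)
| App (f : tm) (args : list tm)
| Abs (n : nat) (body : tm)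
| RealC (r : R)
| IdxC (i : Z)
| BoolC (b : bool)
| Const (c : const)
| Let (e1 e2 : tm)
| If (c e1 e2 : tm)
| Arr (es : list tm)
| Bot
| Op1 (o : op1) (e : tm)
| Op2 (o : op2) (e1 e2 : tm).

Definition ctx := list ty.

Inductive const_ty : const -> ty -> Prop :=
| CT_Build M :
    const_ty CBuild (TFun (TG TIndex) [TFun (TG TIndex) [] M] (TArray M))
| CT_Ifold M :
    const_ty CIfold (TFun (TFun (TG M) [TG TIndex] M) [TG M; TG TIndex] M)
| CT_Get M : const_ty CGet (TFun (TG (TArray M)) [TG TIndex] M)
| CT_Length M : const_ty CLength (TFun (TG (TArray M)) [] TIndex)
| CT_Pair M1 M2 : const_ty CPair (TFun (TG M1) [TG M2] (TProd M1 M2))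
| CT_Fst M1 M2 : const_ty CFst (TFun (TG (TProd M1 M2)) [] M1)
| CT_Snd M1 M2 : const_ty CSnd (TFun (TG (TProd M1 M2)) [] M2).

Inductive op1_ty : op1 -> gty -> gty -> Prop :=
| O1_NegD : op1_ty ONeg TDouble TDouble
| O1_NegI : op1_ty ONeg TIndex TIndex
| O1_Sin : op1_ty OSin TDouble TDouble
| O1_Cos : op1_ty OCos TDouble TDouble
| O1_Tan : op1_ty OTan TDouble TDouble
| O1_Log : op1_ty OLog TDouble TDouble
| O1_Exp : op1_ty OExp TDouble TDouble
| O1_Not : op1_ty ONot TBool TBool.

Definition is_num (A : gty) : Prop := A = TDouble \/ A = TIndex.

Inductive op2_ty : op2 -> gty -> gty -> gty -> Prop :=
| O2_Arith o N : In o [OAdd; OSub; OMul; ODiv; OPow] -> is_num N ->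
    op2_ty o N N N
| O2_Cmp o N : In o [OGt; OLt; OEq; ONeq] -> is_num N ->
    op2_ty o N N TBool
| O2_Bool o : In o [OAnd; OOr] -> op2_ty o TBool TBool TBool.

Inductive has_type : ctx -> tm -> ty -> Prop :=
| T_Var G k T : nth_error G k = Some T -> has_type G (Var k) T
| T_App G e0 args T1 Ts M :
    has_type G e0 (TFun T1 Ts M) ->
    Forall2 (has_type G) args (T1 :: Ts) ->
    has_type G (App e0 args) (TG M)
| T_Abs G e T1 Ts M :
    has_type (rev (T1 :: Ts) ++ G) e (TG M) ->
    has_type G (Abs (S (length Ts)) e) (TFun T1 Ts M)
| T_Real G r : has_type G (RealC r) (TG TDouble)
| T_Idx G i : has_type G (IdxC i) (TG TIndex)
| T_Bool G b : has_type G (BoolC b) (TG TBool)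
| T_Const G c T : const_ty c T -> has_type G (Const c) T
| T_Let G e1 e2 T1 T2 :
    has_type G e1 T1 -> has_type (T1 :: G) e2 T2 -> has_type G (Let e1 e2) T2
| T_If G e1 e2 e3 M :
    has_type G e1 (TG TBool) -> has_type G e2 (TG M) -> has_type G e3 (TG M) ->
    has_type G (If e1 e2 e3) (TG M)
| T_Arr G es M :
    Forall (fun e => has_type G e (TG M)) es -> has_type G (Arr es) (TG (TArray M))
| T_Bot G T : has_type G Bot T
| T_Op1 G o e A B : op1_ty o A B -> has_type G e (TG A) -> has_type G (Op1 o e) (TG B)
| T_Op2 G o e1 e2 A1 A2 B :
    op2_ty o A1 A2 B -> has_type G e1 (TG A1) -> has_type G e2 (TG A2) ->
    has_type G (Op2 o e1 e2) (TG B).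

Definition upren (n : nat) (xi : nat -> nat) : nat -> nat :=
  fun k => if Nat.ltb k n then k else (n + xi (k - n))%nat.

Fixpoint ren (xi : nat -> nat) (t : tm) : tm :=
  match t with
  | Var k => Var (xi k)
  | App f args => App (ren xi f) (map (ren xi) args)
  | Abs n b => Abs n (ren (upren n xi) b)
  | RealC r => RealC r
  | IdxC i => IdxC i
  | BoolC b => BoolC b
  | Const c => Const c
  | Let e1 e2 => Let (ren xi e1) (ren (upren 1 xi) e2)
  | If c a b => If (ren xi c) (ren xi a) (ren xi b)
  | Arr es => Arr (map (ren xi) es)
  | Bot => Bot
  | Op1 o e => Op1 o (ren xi e)
  | Op2 o a b => Op2 o (ren xi a) (ren xi b)
  end.

Definition upsub (n : nat) (sigma : nat -> tm) : nat -> tm :=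
  fun k => if Nat.ltb k n then Var k else ren (fun j => (n + j)%nat) (sigma (k - n)%nat).

Fixpoint subst (sigma : nat -> tm) (t : tm) : tm :=
  match t with
  | Var k => sigma k
  | App f args => App (subst sigma f) (map (subst sigma) args)
  | Abs n b => Abs n (subst (upsub n sigma) b)
  | RealC r => RealC r
  | IdxC i => IdxC i
  | BoolC b => BoolC b
  | Const c => Const c
  | Let e1 e2 => Let (subst sigma e1) (subst (upsub 1 sigma) e2)
  | If c a b => If (subst sigma c) (subst sigma a) (subst sigma b)
  | Arr es => Arr (map (subst sigma) es)
  | Bot => Bot
  | Op1 o e => Op1 o (subst sigma e)
  | Op2 o a b => Op2 o (subst sigma a) (subst sigma b)
  end.

(* e[v1/x1, ..., vn/xn] for the n binders of an abstraction *)
Definition beta_sub (vs : list tm) : nat -> tm :=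
  fun k => if Nat.ltb k (length vs) then nth k (rev vs) Bot
           else Var (k - length vs)%nat.

Definition single_sub (v : tm) : nat -> tm :=
  fun k => match k with 0 => v | S j => Var j end.

Inductive value : tm -> Prop :=
| V_Real r : value (RealC r)
| V_Idx i : value (IdxC i)
| V_Bool b : value (BoolC b)
| V_Pair v0 v1 : value v0 -> value v1 -> value (App (Const CPair) [v0; v1])
| V_Abs n e : value (Abs n e)
| V_Arr vs : Forall value vs -> value (Arr vs)
| V_Const c : value (Const c).

(* scalar constants  (the underlined values of the operator rules) *)
Inductive lit : tm -> Prop :=
| L_Real r : lit (RealC r)
| L_Idx i : lit (IdxC i)
| L_Bool b : lit (BoolC b).

Definition Rbool (b : bool) : option tm := Some (BoolC b).

Definition eval_op1 (o : op1) (v : tm) : option tm :=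
  match o, v with
  | ONeg, RealC r => Some (RealC (- r))
  | ONeg, IdxC i => Some (IdxC (- i)%Z)
  | OSin, RealC r => Some (RealC (sin r))
  | OCos, RealC r => Some (RealC (cos r))
  | OTan, RealC r => if Req_EM_T (cos r) 0 then None else Some (RealC (tan r))
  | OLog, RealC r => if Rlt_dec 0 r then Some (RealC (ln r)) else None
  | OExp, RealC r => Some (RealC (exp r))
  | ONot, BoolC b => Some (BoolC (negb b))
  | _, _ => None
  end.

Definition Reqb (x y : R) : bool := if Req_EM_T x y then true else false.
Definition Rltb (x y : R) : bool := if Rlt_dec x y then true else false.

Definition eval_op2 (o : op2) (v1 v2 : tm) : option tm :=
  match o, v1, v2 with
  | OAdd, RealC x, RealC y => Some (RealC (x + y))
  | OSub, RealC x, RealC y => Some (RealC (x - y))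
  | OMul, RealC x, RealC y => Some (RealC (x * y))
  | ODiv, RealC x, RealC y => if Req_EM_T y 0 then None else Some (RealC (x / y))
  | OPow, RealC x, RealC y => if Rlt_dec 0 x then Some (RealC (Rpower x y)) else None
  | OGt, RealC x, RealC y => Some (BoolC (Rltb y x))
  | OLt, RealC x, RealC y => Some (BoolC (Rltb x y))
  | OEq, RealC x, RealC y => Some (BoolC (Reqb x y))
  | ONeq, RealC x, RealC y => Some (BoolC (negb (Reqb x y)))
  | OAdd, IdxC x, IdxC y => Some (IdxC (x + y)%Z)
  | OSub, IdxC x, IdxC y => Some (IdxC (x - y)%Z)
  | OMul, IdxC x, IdxC y => Some (IdxC (x * y)%Z)
  | ODiv, IdxC x, IdxC y => if Z.eqb y 0 then None else Some (IdxC (x / y)%Z)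
  | OPow, IdxC x, IdxC y => if Z.ltb y 0 then None else Some (IdxC (x ^ y)%Z)
  | OGt, IdxC x, IdxC y => Some (BoolC (Z.ltb y x))
  | OLt, IdxC x, IdxC y => Some (BoolC (Z.ltb x y))
  | OEq, IdxC x, IdxC y => Some (BoolC (Z.eqb x y))
  | ONeq, IdxC x, IdxC y => Some (BoolC (negb (Z.eqb x y)))
  | OAnd, BoolC a, BoolC b => Some (BoolC (andb a b))
  | OOr, BoolC a, BoolC b => Some (BoolC (orb a b))
  | _, _, _ => None
  end.

Definition or_bot (r : option tm) : tm :=
  match r with Some w => w | None => Bot end.

Inductive step : tm -> tm -> Prop :=
| S_AppHead e e' es : step e e' -> step (App e es) (App e' es)
| S_AppArg v vs e e' es :
    value v -> Forall value vs -> step e e' ->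
    step (App v (vs ++ e :: es)) (App v (vs ++ e' :: es))
| S_Op1 o e e' : step e e' -> step (Op1 o e) (Op1 o e')
| S_Op2L o e0 e0' e1 : step e0 e0' -> step (Op2 o e0 e1) (Op2 o e0' e1)
| S_Op2R o v e0 e0' : value v -> step e0 e0' -> step (Op2 o v e0) (Op2 o v e0')
| S_Let e0 e0' e1 : step e0 e0' -> step (Let e0 e1) (Let e0' e1)
| S_If e0 e0' e1 e2 : step e0 e0' -> step (If e0 e1 e2) (If e0' e1 e2)
| S_Arr vs e e' es :
    Forall value vs -> step e e' -> step (Arr (vs ++ e :: es)) (Arr (vs ++ e' :: es))
| S_Beta n e vs :
    Forall value vs -> length vs = n ->
    step (App (Abs n e) vs) (subst (beta_sub vs) e)
| S_LetV v e : value v -> step (Let v e) (subst (single_sub v) e)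
| S_Fst v0 v1 : value v0 -> value v1 ->
    step (App (Const CFst) [App (Const CPair) [v0; v1]]) v0
| S_Snd v0 v1 : value v0 -> value v1 ->
    step (App (Const CSnd) [App (Const CPair) [v0; v1]]) v1
| S_IfT e0 e1 : step (If (BoolC true) e0 e1) e0
| S_IfF e0 e1 : step (If (BoolC false) e0 e1) e1
| S_Op1V o v : lit v -> step (Op1 o v) (or_bot (eval_op1 o v))
| S_Op2V o v0 v1 : lit v0 -> lit v1 -> step (Op2 o v0 v1) (or_bot (eval_op2 o v0 v1))
| S_Get vs i : Forall value vs -> (0 <= i < Z.of_nat (length vs))%Z ->
    step (App (Const CGet) [Arr vs; IdxC i]) (nth (Z.to_nat i) vs Bot)
| S_Length vs : Forall value vs ->
    step (App (Const CLength) [Arr vs]) (IdxC (Z.of_nat (length vs)))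
| S_Build n e : (0 <= n)%Z ->
    step (App (Const CBuild) [IdxC n; Abs 1 e])
         (Arr (map (fun j => subst (single_sub (IdxC (Z.of_nat j))) e)
                   (seq 0 (Z.to_nat n))))
| S_Ifold0 v v0 : value v -> value v0 ->
    step (App (Const CIfold) [v; v0; IdxC 0]) v0
| S_IfoldS v v0 i : value v -> value v0 -> (0 <= i)%Z ->
    step (App (Const CIfold) [v; v0; IdxC (i + 1)])
         (App v [App (Const CIfold) [v; v0; IdxC i]; IdxC i])
| S_BotAppHead es : step (App Bot es) Bot
| S_BotAppArg v vs es :
    value v -> Forall value vs -> step (App v (vs ++ Bot :: es)) Bot
| S_BotOp1 o : step (Op1 o Bot) Bot
| S_BotOp2L o e1 : step (Op2 o Bot e1) Bot
| S_BotOp2R o v : value v -> step (Op2 o v Bot) Bot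
| S_BotLet e1 : step (Let Bot e1) Bot
| S_BotIf e1 e2 : step (If Bot e1 e2) Bot
| S_BotArr vs es : Forall value vs -> step (Arr (vs ++ Bot :: es)) Bot
| S_BotAppHead' e es : step e Bot -> step (App e es) Bot
| S_BotAppArg' v vs e es :
    value v -> Forall value vs -> step e Bot -> step (App v (vs ++ e :: es)) Bot
| S_BotOp1' o e : step e Bot -> step (Op1 o e) Bot
| S_BotOp2L' o e0 e1 : step e0 Bot -> step (Op2 o e0 e1) Bot
| S_BotOp2R' o v e : value v -> step e Bot -> step (Op2 o v e) Bot
| S_BotLet' e0 e1 : step e0 Bot -> step (Let e0 e1) Bot
| S_BotIf' e0 e1 e2 : step e0 Bot -> step (If e0 e1 e2) Bot
| S_BotArr' vs e es : Forall value vs -> step e Bot -> step (Arr (vs ++ e :: es)) Bot.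

(* Main.v *)
Require Import Defs.
From Stdlib Require Import Reals ZArith List Lia.
Import ListNotations.
Local Open Scope nat_scope.

Definition ht_ind (P : ctx -> tm -> ty -> Prop)
  (HVar : forall G k T, nth_error G k = Some T -> P G (Var k) T)
  (HApp : forall G e0 args T1 Ts M, has_type G e0 (TFun T1 Ts M) -> P G e0 (TFun T1 Ts M) ->
      Forall2 (has_type G) args (T1::Ts) -> Forall2 (P G) args (T1::Ts) -> P G (App e0 args) (TG M))
  (HAbs : forall G e T1 Ts M, has_type (rev (T1::Ts) ++ G) e (TG M) -> P (rev (T1 :: Ts) ++ G) e (TG M) ->
      P G (Abs (S (length Ts)) e) (TFun T1 Ts M))
  (HReal : forall G r, P G (RealC r) (TG TDouble))
  (HIdx : forall G i, P G (IdxC i) (TG TIndex))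
  (HBool : forall G b, P G (BoolC b) (TG TBool))
  (HConst : forall G c T, const_ty c T -> P G (Const c) T)
  (HLet : forall G e1 e2 T1 T2, has_type G e1 T1 -> P G e1 T1 -> has_type (T1 :: G) e2 T2 -> P (T1 :: G) e2 T2 -> P G (Let e1 e2) T2)
  (HIf : forall G e1 e2 e3 M, has_type G e1 (TG TBool) -> P G e1 (TG TBool) -> has_type G e2 (TG M) -> P G e2 (TG M) ->
      has_type G e3 (TG M) -> P G e3 (TG M) -> P G (If e1 e2 e3) (TG M))
  (HArr : forall G es M, Forall (fun e => has_type G e (TG M)) es -> Forall (fun e => P G e (TG M)) es -> P G (Arr es) (TG (TArray M)))
  (HBot : forall G T, P G Bot T)
  (HOp1 : forall G o e A B, op1_ty o A B -> has_type G e (TG A) -> P G e (TG A) -> P G (Op1 o e) (TG B))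
  (HOp2 : forall G o e1 e2 A1 A2 B, op2_ty o A1 A2 B -> has_type G e1 (TG A1) -> P G e1 (TG A1) ->
      has_type G e2 (TG A2) -> P G e2 (TG A2) -> P G (Op2 o e1 e2) (TG B))
  : forall G e T, has_type G e T -> P G e T :=
  fix F G e T (H : has_type G e T) {struct H} : P G e T :=
  match H in has_type G e T return P G e T with
  | T_Var G k T h => HVar G k T h
  | T_App G e0 args T1 Ts M h0 hs => HApp G e0 args T1 Ts M h0 (F _ _ _ h0) hs
      ((fix F2 (l1 : list tm) (l2 : list ty) (h : Forall2 (has_type G) l1 l2) {struct h} : Forall2 (P G) l1 l2 :=
         match h in Forall2 _ l1 l2 return Forall2 (P G) l1 l2 with
         | @Forall2_nil _ _ _ => @Forall2_nil _ _ _
         | @Forall2_cons _ _ _ x y l l' hx hl => @Forall2_cons _ _ _ x y l l' (F _ _ _ hx) (F2 l l' hl)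
         end) args (T1::Ts) hs)
  | T_Abs G e T1 Ts M h => HAbs G e T1 Ts M h (F _ _ _ h)
  | T_Real G r => HReal G r
  | T_Idx G i => HIdx G i
  | T_Bool G b => HBool G b
  | T_Const G c T h => HConst G c T h
  | T_Let G e1 e2 T1 T2 h1 h2 => HLet G e1 e2 T1 T2 h1 (F _ _ _ h1) h2 (F _ _ _ h2)
  | T_If G e1 e2 e3 M h1 h2 h3 => HIf G e1 e2 e3 M h1 (F _ _ _ h1) h2 (F _ _ _ h2) h3 (F _ _ _ h3)
  | T_Arr G es M hs => HArr G es M hs
      ((fix F2 (l : list tm) (h : Forall (fun e => has_type G e (TG M)) l) {struct h} : Forall (fun e => P G e (TG M)) l :=
         match h in Forall _ l return Forall (fun e => P G e (TG M)) l with
         | @Forall_nil _ _ => @Forall_nil _ _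
         | @Forall_cons _ _ x l hx hl => @Forall_cons _ _ x l (F _ _ _ hx) (F2 l hl)
         end) es hs)
  | T_Bot G T => HBot G T
  | T_Op1 G o e A B h1 h2 => HOp1 G o e A B h1 h2 (F _ _ _ h2)
  | T_Op2 G o e1 e2 A1 A2 B h h1 h2 => HOp2 G o e1 e2 A1 A2 B h h1 (F _ _ _ h1) h2 (F _ _ _ h2)
  end.

Lemma upren_ok (D G G' : ctx) n xi : length D = n ->
  (forall k T, nth_error G k = Some T -> nth_error G' (xi k) = Some T) ->
  forall k T, nth_error (D ++ G) k = Some T -> nth_error (D ++ G') (upren n xi k) = Some T.
Proof.
  intros Hl Hxi k T Hk. unfold upren. destruct (Nat.ltb_spec k n).
  - rewrite nth_error_app1 in * by lia. auto.
  - rewrite nth_error_app2 in Hk by lia. rewrite nth_error_app2 by lia.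
    subst n. replace (length D + xi (k - length D) - length D)%nat with (xi (k - length D)) by lia. auto.
Qed.

Lemma ren_typing G e T : has_type G e T -> forall G' xi,
  (forall k T, nth_error G k = Some T -> nth_error G' (xi k) = Some T) ->
  has_type G' (ren xi e) T.
Proof.
  intros H; induction H using ht_ind; intros G' xi Hxi; simpl; try solve [econstructor; eauto].
  - econstructor; eauto. clear -H1 Hxi. induction H1; constructor; auto.
  - constructor. apply IHhas_type. apply upren_ok; auto. rewrite length_rev; reflexivity.
  - econstructor; eauto. apply IHhas_type2. apply (upren_ok [T1]); auto.
  - constructor. clear -H0 Hxi. induction H0; constructor; auto.
Qed.

Lemma upsub_ok (D G G' : ctx) n sigma : length D = n ->
  (forall k T, nth_error G k = Some T -> has_type G' (sigma k) T) ->
  forall k T, nth_error (D ++ G) k = Some T -> has_type (D ++ G') (upsub n sigma k) T.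
Proof.
  intros Hl Hs k T Hk. unfold upsub. destruct (Nat.ltb_spec k n).
  - constructor. rewrite nth_error_app1 in * by lia. auto.
  - rewrite nth_error_app2 in Hk by lia. subst n. eapply ren_typing; eauto.
    intros j U Hj. rewrite nth_error_app2 by lia.
    replace (length D + j - length D)%nat with j by lia. auto.
Qed.

Lemma subst_typing G e T : has_type G e T -> forall G' sigma,
  (forall k T, nth_error G k = Some T -> has_type G' (sigma k) T) ->
  has_type G' (subst sigma e) T.
Proof.
  intros H; induction H using ht_ind; intros G' sigma Hs; simpl; try solve [eauto | econstructor; eauto].
  - econstructor; eauto. clear -H1 Hs. induction H1; constructor; auto.
  - constructor. apply IHhas_type. apply upsub_ok; auto. rewrite length_rev; reflexivity.
  - econstructor; eauto. apply IHhas_type2. apply (upsub_ok [T1]); auto.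
  - constructor. clear -H0 Hs. induction H0; constructor; auto.
Qed.

Lemma Forall2_app_mid (R : tm -> ty -> Prop) (l1 l2 : list tm) x x' L :
  Forall2 R (l1 ++ x :: l2) L -> (forall y, R x y -> R x' y) -> Forall2 R (l1 ++ x' :: l2) L.
Proof.
  revert L; induction l1; simpl; intros L H Hx; inversion H; subst; constructor; auto.
Qed.

Lemma Forall_app_mid (R : tm -> Prop) (l1 l2 : list tm) x x' :
  Forall R (l1 ++ x :: l2) -> (R x -> R x') -> Forall R (l1 ++ x' :: l2).
Proof.
  induction l1; simpl; intros H Hx; inversion H; subst; constructor; auto.
Qed.

Lemma Forall_nth_bot (R : tm -> Prop) l n : Forall R l -> R Bot -> R (nth n l Bot).
Proof.
  revert n; induction l; intros [|n] H HB; simpl; auto; inversion H; auto.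
Qed.

Lemma Forall2_nth G vs L k T : Forall2 (has_type G) vs L -> nth_error L k = Some T ->
  has_type G (nth k vs Bot) T.
Proof.
  intros H; revert k; induction H; intros [|k] Hk; simpl in *; try discriminate.
  - inversion Hk; subst; auto.
  - auto.
Qed.

Lemma Forall2_rev' {A B} (R : A -> B -> Prop) l L : Forall2 R l L -> Forall2 R (rev l) (rev L).
Proof.
  induction 1; simpl; auto. apply Forall2_app; auto.
Qed.

Lemma beta_ok G vs L : Forall2 (has_type G) vs L ->
  forall k T, nth_error (rev L ++ G) k = Some T -> has_type G (beta_sub vs k) T.
Proof.
  intros H k T Hk. pose proof (Forall2_length H) as Hl. unfold beta_sub.
  destruct (Nat.ltb_spec k (length vs)).
  - rewrite nth_error_app1 in Hk by (rewrite length_rev; lia).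
    eapply Forall2_nth; eauto. apply Forall2_rev'; auto.
  - rewrite nth_error_app2 in Hk by (rewrite length_rev; lia).
    rewrite length_rev in Hk. constructor. rewrite Hl; auto.
Qed.

Lemma single_ok G v T1 : has_type G v T1 ->
  forall k T, nth_error (T1 :: G) k = Some T -> has_type G (single_sub v k) T.
Proof.
  intros H [|k] T Hk; simpl in *.
  - inversion Hk; subst; auto.
  - constructor; auto.
Qed.

Ltac inv_all := repeat match goal with
 | H : has_type _ (App _ _) _ |- _ => inversion H; subst; clear H
 | H : has_type _ (Const _) _ |- _ => inversion H; subst; clear H
 | H : has_type _ (Abs _ _) _ |- _ => inversion H; subst; clear H
 | H : has_type _ (Arr _) _ |- _ => inversion H; subst; clear H
 | H : const_ty _ _ |- _ => inversion H; subst; clear H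
 | H : Forall2 _ (_ :: _) _ |- _ => inversion H; subst; clear H
 | H : Forall2 _ [] _ |- _ => inversion H; subst; clear H
 end.

Theorem lemma1 (G : ctx) (e e' : tm) (A : ty) :
  has_type G e A -> step e e' -> has_type G e' A.
Proof.
  intros Ht Hs. revert G A Ht. induction Hs; intros G A Ht;
    try solve [constructor].
  all: idtac.
  - inversion Ht; subst. econstructor; eauto.
  - inversion Ht; subst. econstructor; eauto. eapply Forall2_app_mid; eauto.
  - inversion Ht; subst. econstructor; eauto.
  - inversion Ht; subst. econstructor; eauto.
  - inversion Ht; subst. econstructor; eauto.
  - inversion Ht; subst. econstructor; eauto.
  - inversion Ht; subst. econstructor; eauto.
  - inversion Ht; subst. constructor. eapply Forall_app_mid; eauto.
  - inversion Ht; subst. match goal with H : has_type _ (Abs _ _) _ |- _ => inversion H; subst end. eapply subst_typing; eauto.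
    eapply beta_ok; eauto.
  - inversion Ht; subst. eapply subst_typing; eauto. eapply single_ok; eauto.
  - inv_all. auto.
  - inv_all. auto.
  - inversion Ht; subst; auto.
  - inversion Ht; subst; auto.
  - inversion Ht; subst.
    match goal with H : lit _ |- _ => destruct H end;
    match goal with H : has_type _ (_ _) (TG _) |- _ => inversion H; subst end;
    match goal with H : op1_ty _ _ _ |- _ => inversion H; subst end; simpl;
    repeat match goal with |- context [if ?c then _ else _] => destruct c end; constructor.
  - inversion Ht; subst.
    do 2 match goal with H : lit _ |- _ => destruct H end;
    repeat match goal with H : has_type _ (RealC _) (TG _) |- _ => inversion H; subst; clear H
      | H : has_type _ (IdxC _) (TG _) |- _ => inversion H; subst; clear H
      | H : has_type _ (BoolC _) (TG _) |- _ => inversion H; subst; clear H end;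
    match goal with H : op2_ty _ _ _ _ |- _ => inversion H; subst end;
    repeat match goal with H : is_num _ |- _ => destruct H as [Hn|Hn]; inversion Hn; clear Hn end;
    repeat match goal with H : In _ _ |- _ => destruct H as [<-|H]; [|try contradiction] end;
    simpl; repeat match goal with |- context [if ?c then _ else _] => destruct c end; constructor.
  - inv_all. apply Forall_nth_bot; auto. constructor.
  - inv_all. constructor.
  - inv_all. constructor. apply Forall_forall. intros x Hx. apply in_map_iff in Hx.
    destruct Hx as [j [<- _]]. eapply subst_typing; eauto. apply single_ok. constructor.
  - inv_all. auto.
  - inv_all. econstructor; eauto. repeat constructor; auto. econstructor; eauto.
    repeat constructor; auto.
  all: repeat (apply Forall2_cons; [solve [auto | constructor] |]); apply Forall2_nil.
Qed.
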